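(* For $1\le p\le n$, with $M_{np}=\chi_n(\pi,p)$ for $\pi$ uniform on $\mathfrak S_n$, $$\mathbb E[M_{np}]=\frac{n+2p-2-H_{p-1}}{n},$$ where $H_m=\sum_{i=1}^m 1/i$ and $H_0=0$.
   Context: $[n]=\{1,\dots,n\}$, $\mathfrak S_n$ the symmetric group on $[n]$, right action $i\pi$, products composed left to right; $\tau(i,j)$ the transposition exchanging $i,j$ ($\tau(n,n)$ the identity). For $\pi\in\mathfrak S_n$ let $q(\pi)=n\pi^{-1}$, and for $n\ge2$ let $\downarrow\pi\in\mathfrak S_{n-1}$ be the restriction to $[n-1]$ of $\tau(n,q(\pi))\pi$. The ''number of moves'' function $\chi_n(\pi,p)$, $\pi\in\mathfrak S_n$, $p\in[n]$, is defined recursively: $\chi_1(\mathrm{id},1)=1$; for $n\ge2$, with $q=q(\pi)$: $\chi_n(\pi,p)=\chi_{n-1}(\downarrow\pi,p)$ if $p\ne n,p\ne q$; $=1+\chi_{n-1}(\downarrow\pi,q)$ if $p=n\ne q$; $=1$ if $p=q\ne n$; $=1$ if $p=q=n$. *)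

(* Defs.v *)
From mathcomp Require Import all_boot all_order all_algebra all_fingroup.
Set Implicit Arguments. Unset Strict Implicit. Unset Printing Implicit Defensive.
Import GRing.Theory Num.Theory.

(* A permutation of [n] = {1..n} is represented as a function nat -> nat,
   i |-> i pi (right action); only its values on 1..n matter. *)

Definition tau (a b : nat) (i : nat) : nat :=
  if i == a then b else if i == b then a else i.

Definition qf (n : nat) (f : nat -> nat) : nat :=
  (find (fun i => f i == n) (iota 1 n)).+1.

(* down pi = restriction to [n-1] of tau(n,q(pi)) pi  (left-to-right product:
   first tau, then pi) *)
Definition down (n : nat) (f : nat -> nat) : nat -> nat :=
  fun i => f (tau n (qf n f) i).

Fixpoint chi (n : nat) (f : nat -> nat) (p : nat) {struct n} : nat :=
  match n with
  | 0 => 0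
  | m.+1 =>
    if m is 0 then 1 else
    let q := qf n f in
    if p == n then (if q == n then 1 else (chi m (down n f) q).+1)
    else if p == q then 1
    else chi m (down n f) p
  end.

(* view s : 'S_n (a permutation of {0..n-1}) as a permutation of {1..n} *)
Definition perm_fun (n : nat) (s : 'S_n) : nat -> nat :=
  fun i => match @insub _ (fun k => k < n) 'I_n i.-1 with
           | Some j => (s j).+1
           | None => i
           end.

Definition harm (m : nat) : rat := \sum_(1 <= i < m.+1) (i%:R)^-1.

Definition expected_moves (n p : nat) : rat :=
  (\sum_(s : 'S_n) (chi n (perm_fun s) p)%:R) / (n`!)%:R.

(* Main.v *)
Require Import Defs.
From mathcomp Require Import all_boot all_order all_algebra all_fingroup ring zify.
Import GRing.Theory Num.Theory.

Lemma pf_ord N (s : 'S_N) (x : 'I_N) : perm_fun s x.+1 = (s x).+1.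
Proof.
rewrite /perm_fun /= insubT //= => H.
by congr (_ .+1); congr (s _); apply: val_inj.
Qed.

Lemma find_iota (P : pred nat) a N k : k < N -> P (a + k) ->
  (forall j, j < k -> ~~ P (a + j)) -> find P (iota a N) = k.
Proof.
elim: N a k => [//|N IH] a k ltk Pk Hj /=.
case: k ltk Pk Hj => [|k] ltk Pk Hj; first by rewrite addn0 in Pk; rewrite Pk.
have := Hj 0 isT; rewrite addn0 => /negbTE ->.
congr _.+1; apply: IH => //; first by rewrite addSnnS.
by move=> j ltj; rewrite addSnnS; apply: Hj.
Qed.

Lemma chiSS m f p : chi m.+2 f p =
  if p == m.+2 then (if qf m.+2 f == m.+2 then 1 else (chi m.+1 (down m.+2 f) (qf m.+2 f)).+1)
  else if p == qf m.+2 f then 1 else chi m.+1 (down m.+2 f) p.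
Proof. by []. Qed.

Lemma chi_ext n : forall f g p, (forall i, 0 < i <= n -> f i = g i) ->
  chi n f p = chi n g p.
Proof.
elim: n => [//|n IH] f g p H.
have Hq : qf n.+1 f = qf n.+1 g.
  rewrite /qf; congr _.+1; apply: eq_in_find => i.
  rewrite mem_iota => /andP [i1 i2]; rewrite H //; apply/andP; split => //.
have Hd : forall i, 0 < i <= n -> down n.+1 f i = down n.+1 g i.
  move=> i /andP [i1 i2]; rewrite /down Hq; apply: H.
  rewrite /tau; case: eqP => [Ei|_]; first by rewrite Ei ltnn in i2.
  case: eqP => [_|_]; first by rewrite ltnSn.
  by rewrite i1 (leq_trans i2).
case: n IH H Hq Hd => [//|n] IH H Hq Hd.
by rewrite !chiSS Hq !(IH _ _ _ Hd).
Qed.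
Set Implicit Arguments.

Definition Phi n (q : 'I_n.+1) (g : 'S_n) : 'S_n.+1 :=
  (tperm ord_max q * lift_perm ord_max ord_max g)%g.

Lemma Phi_q n q g : Phi (n:=n) q g q = ord_max.
Proof. by rewrite /Phi permM tpermR lift_perm_id. Qed.

Lemma Phi_eqmax n q g x : (Phi (n:=n) q g x == ord_max) = (x == q).
Proof.
rewrite -{1}(Phi_q q g); apply/eqP/eqP => [|->//]; exact: perm_inj.
Qed.

Lemma Phi_inj n : injective (fun x : 'I_n.+1 * 'S_n => Phi x.1 x.2).
Proof.
move=> [q g] [q' g'] /= E.
have Eq : q = q'.
  by apply/eqP; rewrite -(Phi_eqmax q' g') -E Phi_q.
subst q'; move: E; rewrite /Phi => /mulgI E.
congr (_, _); apply/permP => k; apply: (@lift_inj _ ord_max).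
by have := congr1 (fun s : 'S_n.+1 => s (lift ord_max k)) E; rewrite /= !lift_perm_lift.
Qed.

Lemma Phi_bij n : bijective (fun x : 'I_n.+1 * 'S_n => Phi x.1 x.2).
Proof.
apply: inj_card_bij; first exact: Phi_inj.
by rewrite card_prod card_ord !card_Sn factS.
Qed.

Lemma sum_Phi n (F : 'S_n.+1 -> nat) :
  \sum_(s : 'S_n.+1) F s = \sum_(q < n.+1) \sum_(g : 'S_n) F (Phi q g).
Proof.
rewrite pair_bigA /= (reindex (fun x : 'I_n.+1 * 'S_n => Phi x.1 x.2)) //=.
exact: onW_bij (Phi_bij n).
Qed.

Lemma qf_Phi n q g : qf n.+1 (perm_fun (Phi (n:=n) q g)) = q.+1.
Proof.
rewrite /qf; congr _.+1; apply: find_iota => //.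
  by rewrite add1n (pf_ord _ _ q) Phi_q.
move=> j ltj; have ltjn : j < n.+1 by apply: ltn_trans ltj _.
rewrite add1n (pf_ord _ _ (Ordinal ltjn)) eqSS.
have := Phi_eqmax q g (Ordinal ltjn).
rewrite -val_eqE /= => ->; rewrite -val_eqE /=.
by rewrite neq_ltn ltj.
Qed.

Lemma down_Phi n q g i : 0 < i <= n ->
  down n.+1 (perm_fun (Phi (n:=n) q g)) i = perm_fun g i.
Proof.
case: i => [//|j] /andP [_ ltj].
rewrite (pf_ord _ _ (Ordinal ltj)) /down.
have -> : tau n.+1 (qf n.+1 (perm_fun (Phi q g))) j.+1 =
   (tperm ord_max q (lift ord_max (Ordinal ltj))).+1.
  rewrite qf_Phi /tau permE /= -!val_eqE /= /bump leqNgt ltj add0n !eqSS.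
  case: (j =P n) => [E|_]; first by rewrite E ltnn in ltj.
  by case: (j =P q) => //= _; rewrite /bump leqNgt ltj.
rewrite pf_ord /Phi permM tpermK lift_perm_lift.
by rewrite lift_max.
Qed.

Lemma chi_Phi n q g p : 0 < n ->
  chi n.+1 (perm_fun (Phi (n:=n) q g)) p =
  if p == n.+1 then (if q.+1 == n.+1 then 1 else (chi n (perm_fun g) q.+1).+1)
  else if p == q.+1 then 1 else chi n (perm_fun g) p.
Proof.
case: n q g => [//|m] q g _.
rewrite chiSS qf_Phi.
by rewrite !(chi_ext _ _ _ _ (down_Phi q g)).
Qed.

Definition Ssum n p := \sum_(s : 'S_n) chi n (perm_fun s) p.

Lemma Ssum_lt n p : 0 < n -> 0 < p <= n -> Ssum n.+1 p = n`! + n * Ssum n p.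
Proof.
move=> n0 /andP [p0 pn].
rewrite /Ssum sum_Phi.
under eq_bigr => q _ do under eq_bigr => g _ do rewrite chi_Phi //.
have pn1 : p.-1 < n.+1 by rewrite ltnS (leq_trans (leq_pred p) pn).
rewrite (bigD1 (Ordinal pn1)) //=.
have Hp : (p == n.+1) = false by rewrite ltn_eqF // ltnS.
rewrite Hp prednK // eqxx sum_nat_const card_Sn muln1; congr (_ + _).
rewrite (eq_bigr (fun _ => \sum_(g : 'S_n) chi n (perm_fun g) p)).
  by rewrite sum_nat_const cardC1 card_ord.
move=> q qne; apply: eq_bigr => g _.
rewrite ifN //; apply: contra qne => /eqP E.
by apply/eqP; apply: val_inj => /=; rewrite E.
Qed.

Lemma Ssum_top n : 0 < n ->
  Ssum n.+1 n.+1 = \sum_(i < n) Ssum n i.+1 + n * n`! + n`!.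
Proof.
move=> n0; rewrite /Ssum sum_Phi.
under eq_bigr => q _ do under eq_bigr => g _ do rewrite chi_Phi // eqxx.
rewrite big_ord_recr /= eqxx sum_nat_const card_Sn muln1.
congr (_ + _).
rewrite (eq_bigr (fun i : 'I_n => Ssum n i.+1 + n`!)).
  by rewrite big_split /= sum_nat_const card_ord.
move=> i _; rewrite /= eqSS.
have -> : (i == n :> nat) = false by rewrite ltn_eqF.
under eq_bigr => g _ do rewrite -addn1.
by rewrite big_split /= sum_nat_const card_Sn muln1.
Qed.

Lemma Ssum1 : Ssum 1 1 = 1.
Proof. by rewrite /Ssum sum_nat_const card_Sn. Qed.
Local Open Scope ring_scope.

Lemma harm0 : harm 0 = 0.
Proof. by rewrite /harm big_geq. Qed.

Lemma harmS m : harm m.+1 = harm m + (m.+1%:R)^-1.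
Proof. by rewrite /harm big_nat_recr. Qed.

Lemma sum_harm N : \sum_(i < N) harm i = N%:R * harm N - N%:R.
Proof.
elim: N => [|N IH]; first by rewrite big_ord0 harm0 mul0r subr0.
rewrite big_ord_recr /= IH harmS mulrDr.
have H : N.+1%:R * (N.+1%:R)^-1 = 1 :> rat by rewrite mulfV // pnatr_eq0.
rewrite H -addn1 !natrD; ring.
Qed.

Lemma sum_i N : \sum_(i < N) (2 * i%:R : rat) = N%:R * N%:R - N%:R.
Proof.
elim: N => [|N IH]; first by rewrite big_ord0 mul0r subr0.
rewrite big_ord_recr /= IH -addn1 !natrD; ring.
Qed.

Lemma sumA N (c : rat) : \sum_(i < N) (c + 2 * (i.+1)%:R - 2 - harm i) =
  N%:R * c + N%:R * N%:R - N%:R * harm N.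
Proof.
rewrite (eq_bigr (fun i : 'I_N => (c + 2 * i%:R) - harm i)); last first.
  by move=> i _; rewrite -natr1; ring.
rewrite sumrB big_split /= sum_i sum_harm sumr_const card_ord -mulr_natl; ring.
Qed.

Definition A (n p : nat) : rat := n%:R + 2 * p%:R - 2 - harm p.-1.

Lemma key n : forall p, (0 < p <= n.+1)%N ->
  (Ssum n.+1 p)%:R = (n`!)%:R * A n.+1 p.
Proof.
elim: n => [|n IH] p /andP [p0 pn].
  have -> : p = 1%N by apply/eqP; rewrite eqn_leq pn p0.
  by rewrite Ssum1 /A /= harm0 fact0; ring.
have [ltp|eqp] := ltnP p n.+2; last first.
  have -> : p = n.+2 by apply/eqP; rewrite eqn_leq pn eqp.
  rewrite Ssum_top // !natrD natr_sum.
  rewrite (eq_bigr (fun i : 'I_n.+1 => n`!%:R * A n.+1 i.+1)); last first.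
    by move=> i _; rewrite IH //; exact: ltn_ord.
  rewrite -mulr_sumr /A /= sumA.
  rewrite !factS !natrM -!natr1; ring.
rewrite Ssum_lt //; last by rewrite p0 -ltnS.
rewrite natrD natrM IH; last by rewrite p0 -ltnS.
rewrite /A factS natrM -!natr1; ring.
Qed.

Theorem mainTheorem7 (n p : nat) (hp : (1 <= p <= n)%N) :
  expected_moves n p = ((n + 2 * p - 2)%N%:R - harm (p - 1)) / n%:R.
Proof.
case: n hp => [|m] hp; first by case/andP: hp => /leq_trans H /H.
rewrite /expected_moves -natr_sum -/(Ssum m.+1 p) key // /A.
have H2 : (2 <= m.+1 + 2 * p)%N.
  by case/andP: hp => h1 _; lia.
rewrite natrB // natrD natrM subn1 factS natrM.
have f0 : (m`!)%:R != 0 :> rat by rewrite pnatr_eq0 -lt0n fact_gt0.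
have m0 : (m.+1)%:R != 0 :> rat by rewrite pnatr_eq0.
by field; rewrite f0 nat1r m0.
Qed.
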